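(* There exist universal constants $0<c\le C$ such that for all quantum states $\rho,\sigma$ on a common finite-dimensional Hilbert space: (i) if $\alpha\in(0,\tfrac12]$ and $0<\delta\le\alpha/4$, then \[ c\,n^{\star}_{\mathrm{PF}}\!\left(\rho,\sigma,\tfrac{\delta}{\alpha},\tfrac{\delta}{1-\alpha}\right)\le n^{\star}_{\mathrm B}(\rho,\sigma,\alpha,\delta)\le C\,n^{\star}_{\mathrm{PF}}\!\left(\rho,\sigma,\tfrac{\delta}{\alpha},\tfrac{\delta}{1-\alpha}\right); \] (ii) if $\alpha,\beta\in(0,\tfrac18]$ with $\beta\le\alpha$, then \[ c\,n^{\star}_{\mathrm B}\!\left(\rho,\sigma,\tfrac{\beta}{\alpha+\beta},\tfrac{\alpha\beta}{\alpha+\beta}\right)\le n^{\star}_{\mathrm{PF}}(\rho,\sigma,\alpha,\beta)\le C\,n^{\star}_{\mathrm B}\!\left(\rho,\sigma,\tfrac{\beta}{\alpha+\beta},\tfrac{\alpha\beta}{\alpha+\beta}\right). \]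
   Context: $E_\gamma(\rho\|\sigma)=\mathrm{Tr}(\rho-\gamma\sigma)_+$. For $p\in(0,1)$, $p_e(\rho,\sigma,p):=p-pE_{(1-p)/p}(\rho\|\sigma)$ (the minimal error probability of discriminating $\rho$ with prior $p$ from $\sigma$ with prior $1-p$), and $n^{\star}_{\mathrm B}(\rho,\sigma,p,\delta):=\inf\{n\in\mathbb N:p_e(\rho^{\otimes n},\sigma^{\otimes n},p)\le\delta\}$. $n^{\star}_{\mathrm{PF}}(\rho,\sigma,\alpha,\beta)$ is the smallest integer $n$ for which there is an operator $0\le T_n\le I$ on $H^{\otimes n}$ with $\mathrm{Tr}(\rho^{\otimes n}(I-T_n))\le\alpha$ and $\mathrm{Tr}(\sigma^{\otimes n}T_n)\le\beta$. *)

(* Defs.v *)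
From HB Require Import structures.
From mathcomp Require Import all_boot all_order all_algebra.
From mathcomp Require Import complex mxtens.
From mathcomp Require Import boolp classical_sets reals constructive_ereal ereal.
From mathcomp Require Import Rstruct.
From Stdlib Require Rdefinitions.

Set Implicit Arguments.
Unset Strict Implicit.
Unset Printing Implicit Defensive.

Import Order.TTheory GRing.Theory Num.Theory.
Local Open Scope ring_scope.
Local Open Scope complex_scope.
Local Open Scope classical_set_scope.

Notation CC := (complex Rdefinitions.R).

Definition adjmx (m n : nat) (A : 'M[CC]_(m, n)) : 'M[CC]_(n, m) :=
  (map_mx Num.conj A)^T.

Definition psd (n : nat) (A : 'M[CC]_n) : Prop :=
  adjmx A = A /\ forall v : 'rV[CC]_n, 0 <= (v *m A *m adjmx v) 0 0.

Definition density (n : nat) (rho : 'M[CC]_n) : Prop :=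
  psd rho /\ \tr rho = 1.

Definition tpow (d : nat) (A : 'M[CC]_d) (n : nat) : 'M[CC]_(d ^ n)%N :=
  ntensmx A n.

Definition pospart (n : nat) (A : 'M[CC]_n) : 'M[CC]_n :=
  invmx (spectralmx A) *m
  diag_mx (map_mx (fun x : CC => if 0 <= x then x else 0) (spectral_diag A))
  *m spectralmx A.

Definition Egamma (n : nat) (gamma : Rdefinitions.R) (rho sigma : 'M[CC]_n) : CC :=
  \tr (pospart (rho - (gamma%:C) *: sigma)).

Definition perr (n : nat) (rho sigma : 'M[CC]_n) (p : Rdefinitions.R) : CC :=
  p%:C - p%:C * Egamma ((1 - p) / p) rho sigma.

(* Infimum of a set of natural numbers, as an extended real (+oo if empty). *)
Definition nat_inf (P : nat -> Prop) : \bar Rdefinitions.R :=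
  ereal_inf ((fun n : nat => ((n%:R : Rdefinitions.R)%:E)) @` [set n | P n]).

Definition nB (d : nat) (rho sigma : 'M[CC]_d) (p delta : Rdefinitions.R)
  : \bar Rdefinitions.R :=
  nat_inf (fun n => perr (tpow rho n) (tpow sigma n) p <= delta%:C).

Definition nPF (d : nat) (rho sigma : 'M[CC]_d) (alpha beta : Rdefinitions.R)
  : \bar Rdefinitions.R :=
  nat_inf (fun n => exists T : 'M[CC]_(d ^ n)%N,
     psd T /\ psd (1%:M - T) /\
     \tr (tpow rho n *m (1%:M - T)) <= alpha%:C /\
     \tr (tpow sigma n *m T) <= beta%:C).

(* Main.v *)
Require Import Defs.
From HB Require Import structures.
From mathcomp Require Import all_boot all_order all_algebra.
From mathcomp Require Import complex mxtens.
From mathcomp Require Import boolp classical_sets reals constructive_ereal ereal.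
From mathcomp Require Import Rstruct.
From Stdlib Require Rdefinitions.
From mathcomp Require Import sesquilinear spectral.
From mathcomp Require Import ring lra.

Import Order.TTheory GRing.Theory Num.Theory.
Local Open Scope ring_scope.
Local Open Scope complex_scope.

Set Implicit Arguments.
Unset Strict Implicit.
Unset Printing Implicit Defensive.

Lemma adjmxM m n p (A : 'M[CC]_(m,n)) (B : 'M[CC]_(n,p)) :
  adjmx (A *m B) = adjmx B *m adjmx A.
Proof. by rewrite /adjmx map_mxM trmx_mul. Qed.

Lemma adjmxK m n (A : 'M[CC]_(m,n)) : adjmx (adjmx A) = A.
Proof. by apply/matrixP => i j; rewrite !mxE conjCK. Qed.

Lemma adjmxD m n (A B : 'M[CC]_(m,n)) : adjmx (A + B) = adjmx A + adjmx B.
Proof. by apply/matrixP => i j; rewrite !mxE rmorphD. Qed.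

Lemma adjmxB m n (A B : 'M[CC]_(m,n)) : adjmx (A - B) = adjmx A - adjmx B.
Proof. by apply/matrixP => i j; rewrite !mxE rmorphB. Qed.

Lemma adjmx1 n : adjmx (1%:M : 'M[CC]_n) = 1%:M.
Proof. by apply/matrixP => i j; rewrite !mxE eq_sym rmorph_nat. Qed.

Lemma adjmxZr m n (c : Rdefinitions.R) (A : 'M[CC]_(m,n)) :
  adjmx (c%:C *: A) = c%:C *: adjmx A.
Proof. by apply/matrixP => i j; rewrite !mxE rmorphM; congr (_ * _); exact: conjc_real. Qed.

Lemma adjmx_cast m n m' n' (e1 : m = m') (e2 : n = n') (A : 'M[CC]_(m,n)) :
  adjmx (castmx (e1, e2) A) = castmx (e2, e1) (adjmx A).
Proof. by subst; rewrite !castmx_id. Qed.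

Lemma adjmx_tens m n p q (A : 'M[CC]_(m,n)) (B : 'M[CC]_(p,q)) :
  adjmx (A *t B) = adjmx A *t adjmx B.
Proof. by apply/matrixP => i j; rewrite !mxE rmorphM. Qed.

Lemma adjmxE n (A : 'M[CC]_n) : adjmx A = map_mx Num.conj A^T.
Proof. by rewrite /adjmx map_trmx. Qed.

Lemma tr_cast m m' (e : m = m') (A : 'M[CC]_m) : \tr (castmx (e, e) A) = \tr A.
Proof. by subst; rewrite castmx_id. Qed.

Lemma tr_tens m n (A : 'M[CC]_m) (B : 'M[CC]_n) : \tr (A *t B) = \tr A * \tr B.
Proof.
rewrite /mxtrace big_distrlr /= pair_big /=.
rewrite (reindex (@mxtens_index m n)) /=; last first.
  by exists (@mxtens_unindex m n) => x _; [apply: mxtens_indexK | apply: mxtens_unindexK].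
by apply: eq_bigr => [[i j]] _; rewrite tensmxE.
Qed.

Lemma quad_ge0 m n (W : 'M[CC]_(m,n)) i : 0 <= (W *m adjmx W) i i.
Proof. by rewrite mxE; apply: sumr_ge0 => j _; rewrite !mxE; exact: mul_conjC_ge0. Qed.

Lemma tr_gram_ge0 m n (W : 'M[CC]_(m,n)) : 0 <= \tr (W *m adjmx W).
Proof. by apply: sumr_ge0 => i _; exact: quad_ge0. Qed.

Lemma psd_gram m n (X : 'M[CC]_(m,n)) : psd (adjmx X *m X).
Proof.
split; first by rewrite adjmxM adjmxK.
move=> v; have -> : v *m (adjmx X *m X) *m adjmx v
   = (v *m adjmx X) *m adjmx (v *m adjmx X) by rewrite adjmxM adjmxK !mulmxA.
exact: quad_ge0.
Qed.

Lemma psd_add n (A B : 'M[CC]_n) : psd A -> psd B -> psd (A + B).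
Proof.
move=> [hA pA] [hB pB]; split; first by rewrite adjmxD hA hB.
by move=> v; rewrite mulmxDr mulmxDl mxE addr_ge0.
Qed.

Lemma psd_cast m m' (e : m = m') (A : 'M[CC]_m) : psd A -> psd (castmx (e, e) A).
Proof. by subst; rewrite castmx_id. Qed.

Lemma quad_row n (P M : 'M[CC]_n) i :
  (row i P *m M *m adjmx (row i P)) 0 0 = (P *m M *m adjmx P) i i.
Proof. by rewrite -row_mul !mxE; apply: eq_bigr => k _; rewrite !mxE. Qed.

Section Spec.
Variables (n : nat) (A : 'M[CC]_n).
Hypothesis hA : adjmx A = A.
Local Notation P := (spectralmx A).
Local Notation D := (spectral_diag A).

Lemma herm_normal : A \is normalmx.
Proof. by apply/normalmxP; rewrite -adjmxE hA. Qed.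

Lemma spec_unitary : P *m adjmx P = 1%:M.
Proof. by rewrite adjmxE; apply/unitarymxP; exact: spectral_unitarymx. Qed.

Lemma spec_inv : invmx P = adjmx P.
Proof. by rewrite adjmxE; apply: invmx_unitary; exact: spectral_unitarymx. Qed.

Lemma spec_unitary' : adjmx P *m P = 1%:M.
Proof. by rewrite -spec_inv mulVmx // spectral_unit. Qed.

Lemma spec_dec : A = adjmx P *m diag_mx D *m P.
Proof. by rewrite -spec_inv; apply/orthomx_spectralP; exact: herm_normal. Qed.

Lemma spec_diag : P *m A *m adjmx P = diag_mx D.
Proof.
set P := spectralmx A; set D := spectral_diag A.
have E : A = adjmx P *m diag_mx D *m P := spec_dec.
rewrite [X in P *m X]E !mulmxA spec_unitary mul1mx -mulmxA spec_unitary.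
by rewrite mulmx1.
Qed.

Lemma spec_real i : D 0 i \is Num.real.
Proof.
have : D \is a realmx.
  apply: hermitian_spectral_diag_real; apply/is_hermitianmxP.
  by rewrite expr0 scale1r -adjmxE hA.
by move/mxOverP; apply.
Qed.

Lemma spec_entry i : D 0 i = (row i P *m A *m adjmx (row i P)) 0 0.
Proof. by rewrite quad_row spec_diag mxE eqxx mulr1n. Qed.

End Spec.

Lemma adjmx_diag n (s : 'rV[CC]_n) : (forall i, s 0 i \is Num.real) ->
  adjmx (diag_mx s) = diag_mx s.
Proof.
move=> hs; apply/matrixP => i j; rewrite !mxE.
case: (eqVneq j i) => [->|ne]; last by rewrite !mulr0n rmorph0.
by rewrite !mulr1n; apply/CrealP.
Qed.

Lemma gram_diag_aux n (P : 'M[CC]_n) (h s : 'rV[CC]_n) :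
  (forall i, s 0 i \is Num.real) -> (forall i, s 0 i * s 0 i = h 0 i) ->
  adjmx P *m diag_mx h *m P = adjmx (diag_mx s *m P) *m (diag_mx s *m P).
Proof.
move=> sr sh; rewrite adjmxM adjmx_diag // -!mulmxA; congr (_ *m _).
rewrite mulmxA mulmx_diag; congr (_ *m _); congr diag_mx.
by apply/rowP => j; rewrite !mxE sh.
Qed.

Lemma gram_diag n (P : 'M[CC]_n) (h : 'rV[CC]_n) : (forall i, 0 <= h 0 i) ->
  exists X : 'M[CC]_n, adjmx P *m diag_mx h *m P = adjmx X *m X.
Proof.
move=> hh; exists (diag_mx (\row_i sqrtC (h 0 i)) *m P).
apply: gram_diag_aux => i; rewrite mxE; first exact: sqrtC_real.
by rewrite -expr2 sqrtCK.
Qed.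

Lemma psd_spec_ge0 n (A : 'M[CC]_n) : psd A -> forall i, 0 <= spectral_diag A 0 i.
Proof. by move=> [hA pA] i; rewrite spec_entry. Qed.

Lemma psdP n (A : 'M[CC]_n) : psd A -> exists X : 'M[CC]_n, A = adjmx X *m X.
Proof.
move=> pA; have [hA _] := pA.
have [X hX] := gram_diag (spectralmx A) (psd_spec_ge0 pA).
by exists X; rewrite -hX -spec_dec.
Qed.

Lemma psd_tens m n (A : 'M[CC]_m) (B : 'M[CC]_n) : psd A -> psd B -> psd (A *t B).
Proof.
move=> /psdP [X ->] /psdP [Y ->].
by rewrite -tensmx_mul -adjmx_tens; exact: psd_gram.
Qed.

Lemma psd1 n : psd (1%:M : 'M[CC]_n).
Proof. by rewrite -[X in psd X](mulmx1 1%:M) -{1}adjmx1; exact: psd_gram. Qed.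

Lemma tr_psd_ge0 n (A B : 'M[CC]_n) : psd A -> psd B -> 0 <= \tr (A *m B).
Proof.
move=> /psdP [X ->] /psdP [Y ->].
rewrite (_ : \tr _ = \tr ((X *m adjmx Y) *m adjmx (X *m adjmx Y))) ?tr_gram_ge0 //.
by rewrite adjmxM adjmxK -!mulmxA mxtrace_mulC !mulmxA.
Qed.

Section Tens.
Local Notation M := (matrix CC).

Lemma tensmxDl m n p q (A B : 'M[CC]_(m,n)) (C : 'M[CC]_(p,q)) :
  (A + B) *t C = A *t C + B *t C.
Proof. by apply/matrixP => i j; rewrite !mxE mulrDl. Qed.

Lemma tensmxDr m n p q (A : 'M[CC]_(m,n)) (B C : 'M[CC]_(p,q)) :
  A *t (B + C) = A *t B + A *t C.
Proof. by apply/matrixP => i j; rewrite !mxE mulrDr. Qed.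

Lemma tensmxBl m n p q (A B : 'M[CC]_(m,n)) (C : 'M[CC]_(p,q)) :
  (A - B) *t C = A *t C - B *t C.
Proof. by apply/matrixP => i j; rewrite !mxE mulrBl. Qed.

Lemma tensmxBr m n p q (A : 'M[CC]_(m,n)) (B C : 'M[CC]_(p,q)) :
  A *t (B - C) = A *t B - A *t C.
Proof. by apply/matrixP => i j; rewrite !mxE mulrBr. Qed.

Lemma tens11 m n : (1%:M : 'M[CC]_m) *t (1%:M : 'M[CC]_n) = 1%:M.
Proof.
apply/matrixP => i j.
case: (mxtens_indexP i) => i1 i2; case: (mxtens_indexP j) => j1 j2.
rewrite tensmxE !mxE (inj_eq (can_inj (@mxtens_indexK m n))) xpair_eqE.
by case: (i1 == j1); case: (i2 == j2); rewrite ?mulr1 ?mulr0 ?mul0r.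
Qed.

Lemma castmx1 m m' (e : m = m') : castmx (e, e) (1%:M : 'M[CC]_m) = 1%:M.
Proof. by subst; rewrite castmx_id. Qed.

Lemma castmxB m m' (e : m = m') (A B : 'M[CC]_m) :
  castmx (e, e) (A - B) = castmx (e, e) A - castmx (e, e) B.
Proof. by subst; rewrite !castmx_id. Qed.

Lemma tr_cast_mul m m' (e : m = m') (A B : 'M[CC]_m) :
  \tr (castmx (e, e) A *m castmx (e, e) B) = \tr (A *m B).
Proof. by subst; rewrite !castmx_id. Qed.

Lemma castmx_irr T m n m' n' (e1 e2 : (m = m') * (n = n')) (A : 'M[T]_(m, n)) :
  castmx e1 A = castmx e2 A.
Proof.
case: e1 e2 => a b [c d].
by rewrite (eq_irrelevance a c) (eq_irrelevance b d).
Qed.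

Lemma tensmx_cast_r m n p q p' q' (e1 : p = p') (e2 : q = q')
   (A : 'M[CC]_(m,n)) (B : 'M[CC]_(p,q)) :
  A *t castmx (e1, e2) B = castmx (congr1 (muln m) e1, congr1 (muln n) e2) (A *t B).
Proof. by subst; rewrite !castmx_id. Qed.

Lemma tensmx_cast_l m n p q m' n' (e1 : m = m') (e2 : n = n')
   (A : 'M[CC]_(m,n)) (B : 'M[CC]_(p,q)) :
  castmx (e1, e2) A *t B = castmx (congr1 (muln^~ p) e1, congr1 (muln^~ q) e2) (A *t B).
Proof. by subst; rewrite !castmx_id. Qed.

Lemma idxA m n p (i1 : 'I_m) (i2 : 'I_n) (i3 : 'I_p) e :
  cast_ord e (mxtens_index (i1, mxtens_index (i2, i3)))
  = mxtens_index (mxtens_index (i1, i2), i3).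
Proof. by apply: val_inj => /=; rewrite mulnDl -mulnA addnA. Qed.

Lemma tensmxA m n p m' n' p' (A : 'M[CC]_(m,m')) (B : 'M[CC]_(n,n'))
   (C : 'M[CC]_(p,p')) :
  A *t (B *t C) = castmx (esym (mulnA m n p), esym (mulnA m' n' p')) ((A *t B) *t C).
Proof.
apply/matrixP => i j.
case: (mxtens_indexP i) => i1 i23; case: (mxtens_indexP i23) => i2 i3.
case: (mxtens_indexP j) => j1 j23; case: (mxtens_indexP j23) => j2 j3.
by rewrite castmxE !idxA !tensmxE mulrA.
Qed.

Lemma tens1l p q (B : 'M[CC]_(p,q)) :
  (1%:M : 'M[CC]_1) *t B = castmx (esym (mul1n p), esym (mul1n q)) B.
Proof.
apply/matrixP => i j.
case: (mxtens_indexP i) => i1 i2; case: (mxtens_indexP j) => j1 j2.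
rewrite castmxE tensmxE !ord1 mxE eqxx mul1r; congr (B _ _); apply: val_inj => /=;
by rewrite mul0n add0n.
Qed.

Lemma tens1r p q (B : 'M[CC]_(p,q)) :
  B *t (1%:M : 'M[CC]_1) = castmx (esym (muln1 p), esym (muln1 q)) B.
Proof.
apply/matrixP => i j.
case: (mxtens_indexP i) => i1 i2; case: (mxtens_indexP j) => j1 j2.
rewrite castmxE tensmxE !ord1 mxE eqxx mulr1; congr (B _ _); apply: val_inj => /=;
by rewrite muln1 addn0.
Qed.

End Tens.

Lemma tpowS d (A : 'M[CC]_d) k :
  tpow A k.+1 = castmx (esym (expnS d k), esym (expnS d k)) (A *t tpow A k).
Proof.
case: k => [|k]; last by rewrite castmx_id.
rewrite /tpow ntensmx1 ntensmx0 tens1r castmx_comp castmx_id //.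
Qed.

Lemma tpowD d (A : 'M[CC]_d) m n :
  tpow A (m + n) = castmx (esym (expnD d m n), esym (expnD d m n)) (tpow A m *t tpow A n).
Proof.
elim: m => [|m IH].
  by rewrite /tpow ntensmx0 tens1l castmx_comp castmx_id.
rewrite -[LHS]/(tpow A (m + n).+1) tpowS IH tensmx_cast_r castmx_comp tensmxA castmx_comp.
rewrite (tpowS A m) tensmx_cast_l castmx_comp.
exact: castmx_irr.
Qed.

Lemma tr_tpow d (A : 'M[CC]_d) k : \tr (tpow A k) = \tr A ^+ k.
Proof.
elim: k => [|k IH]; first by rewrite /tpow ntensmx0 mxtrace1 expr0.
by rewrite tpowS tr_cast tr_tens IH exprS.
Qed.

Lemma psd_tpow d (A : 'M[CC]_d) k : psd A -> psd (tpow A k).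
Proof.
move=> pA; elim: k => [|k IH]; first by rewrite /tpow ntensmx0; exact: psd1.
by rewrite tpowS; apply: psd_cast; apply: psd_tens.
Qed.

Definition posf (x : CC) : CC := if 0 <= x then x else 0.

Lemma tr_conj n (P X : 'M[CC]_n) : P *m adjmx P = 1%:M ->
  \tr (adjmx P *m X *m P) = \tr X.
Proof. by move=> hP; rewrite -mulmxA mxtrace_mulC -mulmxA hP mulmx1. Qed.

Lemma tr_diag_mul n (D : 'rV[CC]_n) (X : 'M[CC]_n) :
  \tr (diag_mx D *m X) = \sum_i D 0 i * X i i.
Proof. by rewrite mul_diag_mx /mxtrace; apply: eq_bigr => i _; rewrite mxE. Qed.

Lemma diag_one_sub n (g : 'rV[CC]_n) :
  diag_mx (\row_i (1 - g 0 i)) = 1%:M - diag_mx g.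
Proof.
apply/matrixP => i j; rewrite !mxE.
by case: (eqVneq i j) => [->|ne]; rewrite ?mulr1n ?mulr0n ?subr0.
Qed.

Section Helstrom.
Variables (n : nat) (A : 'M[CC]_n).
Hypothesis hA : adjmx A = A.
Local Notation P := (spectralmx A).
Local Notation D := (spectral_diag A).

Lemma tr_pospart : \tr (pospart A) = \sum_i posf (D 0 i).
Proof.
rewrite /pospart spec_inv // tr_conj ?spec_unitary // mxtrace_diag.
by apply: eq_bigr => i _; rewrite mxE.
Qed.

Lemma helstrom_le (T : 'M[CC]_n) : psd T -> psd (1%:M - T) ->
  \tr (A *m T) <= \tr (pospart A).
Proof.
move=> [_ pT] [_ pT'].
have -> : \tr (A *m T) = \tr (diag_mx D *m (P *m T *m adjmx P)).
  by rewrite {1}(spec_dec hA) -!mulmxA mxtrace_mulC !mulmxA.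
rewrite tr_diag_mul tr_pospart; apply: ler_sum => i _.
have t0 : 0 <= (P *m T *m adjmx P) i i by rewrite -quad_row.
have t1 : 0 <= 1 - (P *m T *m adjmx P) i i.
  have := pT' (row i P); rewrite quad_row mulmxBr mulmxBl mulmx1 spec_unitary //.
  by rewrite !mxE eqxx mulr1n.
rewrite /posf; case: ifP => hD.
  by apply: ler_piMr => //; rewrite -subr_ge0.
apply: mulr_le0_ge0 => //.
have := real_leVge (spec_real hA i) (real0 _).
by rewrite hD orbF.
Qed.

Lemma helstrom_proj : exists Q : 'M[CC]_n,
  [/\ psd Q, psd (1%:M - Q) & \tr (A *m Q) = \tr (pospart A)].
Proof.
set g := \row_i (if 0 <= D 0 i then (1 : CC) else 0).
have g01 : forall i, 0 <= g 0 i /\ 0 <= 1 - g 0 i.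
  by move=> i; rewrite mxE; case: ifP => _; rewrite ?subr0 ?subrr ?ler01 ?lexx.
exists (adjmx P *m diag_mx g *m P); split.
- have [X ->] := gram_diag P (fun i => (g01 i).1); exact: psd_gram.
- have -> : 1%:M - adjmx P *m diag_mx g *m P
          = adjmx P *m diag_mx (\row_i (1 - g 0 i)) *m P.
    by rewrite diag_one_sub mulmxBr mulmxBl mulmx1 spec_unitary'.
  have h2 : forall i, 0 <= (\row_i (1 - g 0 i) : 'rV[CC]_n) 0 i.
    by move=> i; rewrite mxE; exact: (g01 i).2.
  have [X ->] := gram_diag P h2.
  exact: psd_gram.
- rewrite {1}(spec_dec hA) !mulmxA -(mulmxA _ P) spec_unitary // mulmx1.
  rewrite -(mulmxA _ (diag_mx D)) mulmx_diag tr_conj ?spec_unitary //.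
  rewrite mxtrace_diag tr_pospart; apply: eq_bigr => i _; rewrite !mxE /posf.
  by case: ifP; rewrite ?mulr1 ?mulr0.
Qed.

End Helstrom.

Definition test m (R S Z : 'M[CC]_m) (x y : Rdefinitions.R) :=
  [/\ psd Z, psd (1%:M - Z), \tr (R *m (1%:M - Z)) = x%:C & \tr (S *m Z) = y%:C].

Lemma zm1 (V : zmodType) (a b c : V) : a - (b - c) = (a - b) + c.
Proof. by rewrite opprB addrA addrAC. Qed.

Lemma trZ m (R Z : 'M[CC]_m) x : \tr (R *m (1%:M - Z)) = x%:C -> \tr R = 1 ->
  \tr (R *m Z) = 1 - x%:C.
Proof.
move=> h1 h2; have : \tr R - \tr (R *m Z) = x%:C.
  by rewrite -h1 mulmxBr mulmx1 raddfB.
by rewrite h2 => <-; rewrite opprB addrC subrK.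
Qed.

Lemma test_cast m m' (e : m = m') (R S Z : 'M[CC]_m) x y : test R S Z x y ->
  test (castmx (e,e) R) (castmx (e,e) S) (castmx (e,e) Z) x y.
Proof. by subst; rewrite !castmx_id. Qed.

Lemma test_and m1 m2 (R1 S1 Z1 : 'M[CC]_m1) (R2 S2 Z2 : 'M[CC]_m2) x1 y1 x2 y2 :
  test R1 S1 Z1 x1 y1 -> test R2 S2 Z2 x2 y2 -> \tr R1 = 1 -> \tr R2 = 1 ->
  test (R1 *t R2) (S1 *t S2) (Z1 *t Z2) (1 - (1 - x1) * (1 - x2)) (y1 * y2).
Proof.
move=> [p1 q1 a1 b1] [p2 q2 a2 b2] r1 r2.
have E : 1%:M - Z1 *t Z2 = (1%:M - Z1) *t 1%:M + Z1 *t (1%:M - Z2).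
  by rewrite tensmxBl tensmxBr tens11 addrA subrK.
split.
- exact: psd_tens.
- by rewrite E; apply: psd_add; apply: psd_tens => //; exact: psd1.
- rewrite mulmxBr mulmx1 raddfB /= tensmx_mul !tr_tens r1 r2.
  rewrite (trZ a1 r1) (trZ a2 r2).
  by rewrite rmorphB rmorph1 rmorphM !rmorphB !rmorph1 /=; ring.
- by rewrite tensmx_mul tr_tens b1 b2 rmorphM.
Qed.

Lemma test_or m1 m2 (R1 S1 Z1 : 'M[CC]_m1) (R2 S2 Z2 : 'M[CC]_m2) x1 y1 x2 y2 :
  test R1 S1 Z1 x1 y1 -> test R2 S2 Z2 x2 y2 -> \tr S1 = 1 -> \tr S2 = 1 ->
  test (R1 *t R2) (S1 *t S2) (1%:M - (1%:M - Z1) *t (1%:M - Z2))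
       (x1 * x2) (1 - (1 - y1) * (1 - y2)).
Proof.
move=> [p1 q1 a1 b1] [p2 q2 a2 b2] r1 r2.
have E : 1%:M - (1%:M - Z1) *t (1%:M - Z2) = Z1 *t 1%:M + (1%:M - Z1) *t Z2.
  rewrite tensmxBr zm1 -tens11 -tensmxBl.
  by rewrite (_ : 1%:M - (1%:M - Z1) = Z1) // opprB addrC subrK.
have E2 : 1%:M - (1%:M - (1%:M - Z1) *t (1%:M - Z2)) = (1%:M - Z1) *t (1%:M - Z2).
  by rewrite opprB addrC subrK.
split.
- by rewrite E; apply: psd_add; apply: psd_tens => //; exact: psd1.
- by rewrite E2; exact: psd_tens.
- by rewrite E2 tensmx_mul tr_tens a1 a2 rmorphM.
- have c1 : \tr (S1 *m (1%:M - Z1)) = 1 - y1%:C.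
    by rewrite mulmxBr mulmx1 raddfB /= b1 r1.
  have c2 : \tr (S2 *m (1%:M - Z2)) = 1 - y2%:C.
    by rewrite mulmxBr mulmx1 raddfB /= b2 r2.
  rewrite mulmxBr mulmx1 raddfB /= tensmx_mul !tr_tens r1 r2 c1 c2.
  by rewrite rmorphB rmorph1 rmorphM !rmorphB !rmorph1 /=; ring.
Qed.

Definition ach d (rho sigma : 'M[CC]_d) N x y :=
  exists Z, test (tpow rho N) (tpow sigma N) Z x y.

Section Ach.
Variables (d : nat) (rho sigma : 'M[CC]_d).
Hypotheses (dr : density rho) (ds : density sigma).

Lemma trp_r N : \tr (tpow rho N) = 1.
Proof. by rewrite tr_tpow dr.2 expr1n. Qed.
Lemma trp_s N : \tr (tpow sigma N) = 1.
Proof. by rewrite tr_tpow ds.2 expr1n. Qed.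

Lemma ach_and N M x1 y1 x2 y2 : ach rho sigma N x1 y1 -> ach rho sigma M x2 y2 ->
  ach rho sigma (N + M) (1 - (1 - x1) * (1 - x2)) (y1 * y2).
Proof.
move=> [Z1 h1] [Z2 h2]; eexists; rewrite !tpowD.
apply: test_cast; apply: test_and h1 h2 _ _; exact: trp_r.
Qed.

Lemma ach_or N M x1 y1 x2 y2 : ach rho sigma N x1 y1 -> ach rho sigma M x2 y2 ->
  ach rho sigma (N + M) (x1 * x2) (1 - (1 - y1) * (1 - y2)).
Proof.
move=> [Z1 h1] [Z2 h2]; eexists; rewrite !tpowD.
apply: test_cast; apply: test_or h1 h2 _ _; exact: trp_s.
Qed.

Lemma ach_round N x y : ach rho sigma N x y ->
  ach rho sigma (N + N + (N + N)) ((1 - (1 - x) * (1 - x)) * (1 - (1 - x) * (1 - x)))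
     (1 - (1 - y * y) * (1 - y * y)).
Proof. by move=> h; exact: (ach_or (ach_and h h) (ach_and h h)). Qed.

End Ach.

Local Notation RR := Rdefinitions.R.

Definition hf (x : RR) := (1 - (1 - x) * (1 - x)) * (1 - (1 - x) * (1 - x)).
Definition gf (y : RR) := 1 - (1 - y * y) * (1 - y * y).

Lemma hf_bounds (x : RR) : 0 <= x -> x <= 1/4 ->
  [/\ 0 <= hf x, hf x <= 4 * x * x & hf x <= 49/64 * x].
Proof.
move=> x0 x1; rewrite /hf.
have u0 : 0 <= 1 - (1 - x) * (1 - x) by nra.
have u1 : 1 - (1 - x) * (1 - x) <= 2 * x by nra.
split.
- exact: mulr_ge0.
- nra.
- have q0 : 0 <= x * x - 15/4 * x + 49/16 by nra.
  have pq : 0 <= (1/4 - x) * (x * x - 15/4 * x + 49/16) by apply: mulr_ge0 => //; lra.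
  nra.
Qed.

Lemma hf3 (x : RR) : 0 <= x -> x <= 1/4 ->
  0 <= hf (hf (hf x)) /\ hf (hf (hf x)) <= x / 2.
Proof.
move=> x0 x1.
have [a0 a1 a2] := hf_bounds x0 x1.
have b1 : hf x <= 1/4 by lra.
have [c0 c1 c2] := hf_bounds a0 b1.
have d1 : hf (hf x) <= 1/4 by lra.
have [e0 e1 e2] := hf_bounds c0 d1.
split => //.
have f1 : hf x <= 49/256 by lra.
have f2 : hf (hf x) <= 4 * (49/256) * hf x by nra.
have f3 : hf (hf x) <= 3/20 by nra.
have f4 : hf (hf (hf x)) <= 4 * (3/20) * hf (hf x) by nra.
nra.
Qed.

Lemma gf_bounds (y : RR) : 0 <= y -> y <= 1/4 -> 0 <= gf y /\ gf y <= y / 2.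
Proof.
move=> y0 y1; rewrite /gf.
have s0 : 0 <= y * y by nra.
have s1 : y * y <= 1/16 by nra.
split; nra.
Qed.

Lemma gf3 (y : RR) : 0 <= y -> y <= 1/4 ->
  0 <= gf (gf (gf y)) /\ gf (gf (gf y)) <= y / 2.
Proof.
move=> y0 y1.
have [a0 a1] := gf_bounds y0 y1.
have [b0 b1] := gf_bounds a0 (ltac:(lra) : gf y <= 1/4).
have [c0 c1] := gf_bounds b0 (ltac:(lra) : gf (gf y) <= 1/4).
split => //; lra.
Qed.

Lemma amplify d (rho sigma : 'M[CC]_d) : density rho -> density sigma ->
  forall N x y, ach rho sigma N x y -> 0 <= x -> x <= 1/4 -> 0 <= y -> y <= 1/4 ->
  exists x' y', [/\ ach rho sigma (64 * N) x' y', x' <= x / 2 & y' <= y / 2].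
Proof.
move=> dr ds N x y h x0 x1 y0 y1.
have h1 := ach_round dr ds h.
have h2 := ach_round dr ds h1.
have h3 := ach_round dr ds h2.
have [_ hx] := hf3 x0 x1.
have [_ hy] := gf3 y0 y1.
exists (hf (hf (hf x))), (gf (gf (gf y))); split => //.
have -> : (64 * N = (N + N + (N + N)) + (N + N + (N + N)) +
   ((N + N + (N + N)) + (N + N + (N + N))) +
   ((N + N + (N + N)) + (N + N + (N + N)) +
   ((N + N + (N + N)) + (N + N + (N + N)))) +
   ((N + N + (N + N)) + (N + N + (N + N)) +
   ((N + N + (N + N)) + (N + N + (N + N))) +
   ((N + N + (N + N)) + (N + N + (N + N)) +
   ((N + N + (N + N)) + (N + N + (N + N))))))%N by ring.
exact: h3.
Qed.

Section NatInf.
Local Open Scope classical_set_scope.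

Lemma nat_inf_le (P : nat -> Prop) n : P n -> (nat_inf P <= (n%:R : RR)%:E)%E.
Proof. by move=> Pn; apply: ge_ereal_inf; exists (n%:R : RR)%:E => //; exists n. Qed.

Lemma nat_inf_min (P : nat -> Prop) : (exists n, P n) ->
  exists n, P n /\ nat_inf P = (n%:R : RR)%:E.
Proof.
move=> ex.
have ex' : exists n, `[< P n >] by case: ex => n Pn; exists n; apply/asboolP.
case: (ex_minnP ex') => n /asboolP Pn minn.
exists n; split => //; apply/eqP; rewrite eq_le nat_inf_le //=.
apply: le_ereal_inf_tmp => _ [m Pm <-].
by rewrite lee_fin ler_nat; apply: minn; apply/asboolP.
Qed.

Lemma nat_inf_none (P : nat -> Prop) : ~ (exists n, P n) -> nat_inf P = +oo%E.
Proof.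
move=> nex; rewrite /nat_inf.
have -> : [set n | P n] = set0.
  by apply/seteqP; split => n //= Pn; apply: nex; exists n.
by rewrite image_set0 ereal_inf0.
Qed.

Lemma inf_rel_lo (P Q : nat -> Prop) (k : nat) (c : RR) : 0 < c -> c * k%:R <= 1 ->
  (forall n, Q n -> P (k * n)%N) -> (c%:E * nat_inf P <= nat_inf Q)%E.
Proof.
move=> c0 ck QP.
case: (pselect (exists n, Q n)) => [exQ|nexQ]; last by rewrite (nat_inf_none nexQ) leey.
have [n [Qn ->]] := nat_inf_min exQ.
have H1 : (c%:E * nat_inf P <= c%:E * ((k * n)%N%:R : RR)%:E)%E.
  by apply: lee_wpmul2l; [rewrite lee_fin ltW | exact: nat_inf_le (QP _ Qn)].
apply: le_trans H1 _.
rewrite -EFinM lee_fin natrM mulrA.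
have n0 : (0 : RR) <= n%:R by rewrite ler0n.
nra.
Qed.

Lemma inf_rel_hi (P Q : nat -> Prop) (k : nat) (C : RR) : 0 < C -> k%:R <= C ->
  (forall n, P n -> Q (k * n)%N) -> (nat_inf Q <= C%:E * nat_inf P)%E.
Proof.
move=> C0 kC PQ.
case: (pselect (exists n, P n)) => [exP|nexP]; last first.
  by rewrite (nat_inf_none nexP) gt0_muley ?leey // lte_fin.
have [n [Pn ->]] := nat_inf_min exP.
have H1 : (nat_inf Q <= ((k * n)%N%:R : RR)%:E)%E by exact: nat_inf_le (PQ _ Pn).
apply: le_trans H1 _.
rewrite -EFinM lee_fin natrM.
have n0 : (0 : RR) <= n%:R by rewrite ler0n.
nra.
Qed.

End NatInf.

Lemma ge0C (z : CC) : 0 <= z -> exists r : RR, z = r%:C /\ 0 <= r.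
Proof.
move=> z0; have /complex_realP [r rE] := ger0_real z0.
by exists r; split => //; rewrite -ler0c -rE.
Qed.

Section Main.
Variables (d : nat) (rho sigma : 'M[CC]_d).
Hypotheses (dr : density rho) (ds : density sigma).

Lemma herm_diff N (g : RR) :
  adjmx (tpow rho N - g%:C *: tpow sigma N) = tpow rho N - g%:C *: tpow sigma N.
Proof.
have [h1 _] := psd_tpow N dr.1; have [h2 _] := psd_tpow N ds.1.
by rewrite adjmxB adjmxZr h1 h2.
Qed.

Lemma tr_diff N (g : RR) (Z : 'M[CC]_(d ^ N)) :
  \tr ((tpow rho N - g%:C *: tpow sigma N) *m Z)
  = \tr (tpow rho N *m Z) - g%:C * \tr (tpow sigma N *m Z).
Proof. by rewrite mulmxBl raddfB /= -scalemxAl mxtraceZ. Qed.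

Lemma B_to_PF N (p delta a b : RR) : 0 < p -> p < 1 ->
  delta <= p * a -> delta <= (1 - p) * b ->
  perr (tpow rho N) (tpow sigma N) p <= delta%:C ->
  exists T : 'M[CC]_(d ^ N), psd T /\ psd (1%:M - T) /\
     \tr (tpow rho N *m (1%:M - T)) <= a%:C /\ \tr (tpow sigma N *m T) <= b%:C.
Proof.
move=> p0 p1 ha hb hp.
set g := (1 - p) / p.
have [Q [pQ pQ' hQ]] := helstrom_proj (herm_diff N g).
have [xr [hx xr0]] := ge0C (tr_psd_ge0 (psd_tpow N dr.1) pQ').
have [yr [hy yr0]] := ge0C (tr_psd_ge0 (psd_tpow N ds.1) pQ).
have rQ := trZ hx (trp_r dr N).
have pg : p * g = 1 - p by rewrite /g; field; rewrite gt_eqF.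
have E : perr (tpow rho N) (tpow sigma N) p = (p * xr + (1 - p) * yr)%:C.
  rewrite /perr /Egamma -/g -hQ tr_diff rQ hy.
  have -> : p * xr + (1 - p) * yr = p - p * ((1 - xr) - g * yr).
    by rewrite -pg; ring.
  by rewrite !(rmorphB, rmorphM, rmorph1).
move: hp; rewrite E lecR => hp.
exists Q; split => //; split => //; rewrite hx hy !lecR; split.
- have : p * xr <= p * a by nra.
  by rewrite ler_pM2l.
- have : (1 - p) * yr <= (1 - p) * b by nra.
  by rewrite ler_pM2l // subr_gt0.
Qed.

Lemma PF_ach N (a b : RR) :
  (exists T : 'M[CC]_(d ^ N), psd T /\ psd (1%:M - T) /\
     \tr (tpow rho N *m (1%:M - T)) <= a%:C /\ \tr (tpow sigma N *m T) <= b%:C) ->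
  exists x y, [/\ ach rho sigma N x y, 0 <= x, x <= a, 0 <= y & y <= b].
Proof.
move=> [T [pT [pT' [ha hb]]]].
have [xr [hx xr0]] := ge0C (tr_psd_ge0 (psd_tpow N dr.1) pT').
have [yr [hy yr0]] := ge0C (tr_psd_ge0 (psd_tpow N ds.1) pT).
exists xr, yr; split => //.
- by exists T; split.
- by rewrite -lecR -hx.
- by rewrite -lecR -hy.
Qed.

Lemma PF_to_B N (p delta a b : RR) : 0 < p -> p <= 1 ->
  a <= 1/4 -> b <= 1/4 -> p * (a / 2) + (1 - p) * (b / 2) <= delta ->
  (exists T : 'M[CC]_(d ^ N), psd T /\ psd (1%:M - T) /\
     \tr (tpow rho N *m (1%:M - T)) <= a%:C /\ \tr (tpow sigma N *m T) <= b%:C) ->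
  perr (tpow rho (64 * N)) (tpow sigma (64 * N)) p <= delta%:C.
Proof.
move=> p0 p1 a1 b1 hd /PF_ach [x [y [hxy x0 xa y0 yb]]].
have [x' [y' [[Z [pZ pZ' hx hy]] hx' hy']]] :=
  amplify dr ds hxy x0 (le_trans xa a1) y0 (le_trans yb b1).
set g := (1 - p) / p.
have hl := helstrom_le (herm_diff (64 * N) g) pZ pZ'.
rewrite tr_diff (trZ hx (trp_r dr _)) hy in hl.
rewrite /perr /Egamma -/g.
apply: (@le_trans _ _ (p%:C - p%:C * (1 - x'%:C - g%:C * y'%:C))).
  by rewrite lerD2l lerN2; apply: ler_wpM2l => //; rewrite ler0c ltW.
have pg : p * g = 1 - p by rewrite /g; field; rewrite gt_eqF.
have -> : p%:C - p%:C * (1 - x'%:C - g%:C * y'%:C) = (p - p * (1 - x' - g * y'))%:C.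
  by rewrite !(rmorphB, rmorphM, rmorph1).
rewrite lecR.
have -> : p - p * (1 - x' - g * y') = p * x' + (1 - p) * y' by rewrite -pg; ring.
nra.
Qed.

End Main.

Theorem mainTheorem8 :
  exists c C : Rdefinitions.R, 0 < c /\ c <= C /\
  forall (d : nat) (rho sigma : 'M[CC]_d),
    density rho -> density sigma ->
    (forall alpha delta : Rdefinitions.R,
       0 < alpha -> alpha <= 1 / 2 -> 0 < delta -> delta <= alpha / 4 ->
       (c%:E * nPF rho sigma (delta / alpha)%R (delta / (1 - alpha))%R
          <= nB rho sigma alpha%R delta%R)%E /\
       (nB rho sigma alpha%R delta%R
          <= C%:E * nPF rho sigma (delta / alpha)%R (delta / (1 - alpha))%R)%E) /\
    (forall alpha beta : Rdefinitions.R,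
       0 < alpha -> alpha <= 1 / 8 -> 0 < beta -> beta <= 1 / 8 -> beta <= alpha ->
       (c%:E * nB rho sigma (beta / (alpha + beta))%R (alpha * beta / (alpha + beta))%R
          <= nPF rho sigma alpha%R beta%R)%E /\
       (nPF rho sigma alpha%R beta%R
          <= C%:E * nB rho sigma (beta / (alpha + beta))%R (alpha * beta / (alpha + beta))%R)%E).
Proof.
exists (1/64), 64; split; first lra; split; first lra.
move=> d rho sigma dr ds; split.
- move=> alpha delta a0 a1 d0 d1.
  have a1' : 0 < 1 - alpha by lra.
  have ea : alpha * (delta / alpha) = delta by field; rewrite gt_eqF.
  have eb : (1 - alpha) * (delta / (1 - alpha)) = delta by field; rewrite gt_eqF.
  have ha : delta / alpha <= 1/4 by nra.
  have hb : delta / (1 - alpha) <= 1/4 by nra.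
  split.
  + rewrite /nB /nPF; apply: (@inf_rel_lo _ _ 1%N); [lra | rewrite mulr1; lra |].
    move=> n hn; rewrite mul1n.
    by apply: (B_to_PF dr ds _ _ _ _ hn) => //; [lra | rewrite ea | rewrite eb].
  + rewrite /nB /nPF; apply: (@inf_rel_hi _ _ 64%N); [lra | lra |].
    move=> n hn; apply: (PF_to_B dr ds _ _ _ _ _ hn) => //; first lra.
    have -> : alpha * (delta / alpha / 2) + (1 - alpha) * (delta / (1 - alpha) / 2)
       = (alpha * (delta / alpha) + (1 - alpha) * (delta / (1 - alpha))) / 2 by ring.
    rewrite ea eb; lra.
- move=> alpha beta a0 a1 b0 b1 ba.
  have s0 : 0 < alpha + beta by lra.
  set p := beta / (alpha + beta); set dl := alpha * beta / (alpha + beta).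
  have e1 : p * alpha = dl by rewrite /p /dl; field; rewrite gt_eqF.
  have e2 : (1 - p) * beta = dl by rewrite /p /dl; field; rewrite gt_eqF.
  have p0 : 0 < p by rewrite /p divr_gt0.
  have p1 : p < 1.
    have : p * (alpha + beta) = beta by rewrite /p; field; rewrite gt_eqF.
    nra.
  split.
  + rewrite /nB /nPF; apply: (@inf_rel_lo _ _ 64%N); [lra | lra |].
    move=> n hn; apply: (PF_to_B dr ds _ _ _ _ _ hn) => //; lra.
  + rewrite /nB /nPF; apply: (@inf_rel_hi _ _ 1%N); [lra | lra |].
    move=> n hn; rewrite mul1n.
    by apply: (B_to_PF dr ds _ _ _ _ hn) => //; rewrite ?e1 ?e2.
Qed.
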